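(* Let $U$ be a finite nonempty set, $(T,I,N)$ an IMTL triplet, $\widetilde{R}$ a $T$-preorder relation on $U$, $A$ a fuzzy set on $U$, and $L:\mathbb{R}\times\mathbb{R}\to\mathbb{R}^+$ a loss function of $\lor$-type. Let $\hat{A}:U\to[0,1]$ be an optimal solution of $$\text{minimize }\sum_{u\in U}L(A(u),\hat{A}(u))\quad\text{subject to } T(\widetilde{R}(u,v),\hat{A}(v))\le\hat{A}(u)\ (u,v\in U),\quad 0\le\hat{A}(u)\le1\ (u\in U),$$ and let $U^-=\{u;\hat{A}(u)<A(u)\}$, $U^0=\{u;\hat{A}(u)=A(u)\}$, $U^+=\{u;\hat{A}(u)>A(u)\}$. Then: for every $u\in U^+$ there is $v\in U^-\cup U^0$ such that $\widetilde{R}^+_{\hat{A}(v)}(v)$ is adjacent to $\widetilde{R}^-_{N(\hat{A}(u))}(u)$; and for every $u\in U^-$ there is $v\in U^+\cup U^0$ such that $\widetilde{R}^-_{N(\hat{A}(v))}(v)$ is adjacent to $\widetilde{R}^+_{\hat{A}(u)}(u)$.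
   Context: A residual triplet $(T,I,N)$ consists of a left-continuous $t$-norm $T$, its residual implicator $I(x,y)=\sup\{\beta\in[0,1]: T(x,\beta)\le y\}$ and $N(x)=I(x,0)$; it is IMTL if $N$ is involutive. $\widetilde{R}:U\times U\to[0,1]$ is a $T$-preorder if reflexive and $T$-transitive. Granules: $\widetilde{R}^+_\lambda(u)$ is the fuzzy set $w\mapsto T(\widetilde{R}(w,u),\lambda)$ and $\widetilde{R}^-_\lambda(v)$ is $w\mapsto T(\widetilde{R}(v,w),\lambda)$. Adjacency: for $x,y\in U$, $\widetilde{R}^-_{\lambda_2}(y)$ is adjacent to $\widetilde{R}^+_{\lambda_1}(x)$ if $\lambda_1=I(\lambda_2,N(\widetilde{R}(y,x)))$; $\widetilde{R}^+_{\lambda_1}(x)$ is adjacent to $\widetilde{R}^-_{\lambda_2}(y)$ if $\lambda_2=I(\lambda_1,N(\widetilde{R}(y,x)))$. A loss function $L$ is of $\lor$-type if for every real $a$: $L(a,a)=0$; $x\mapsto L(x,a)$ and $x\mapsto L(a,x)$ are increasing for $x>a$ and decreasing for $x<a$. *)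

(* Defs.v *)
From HB Require Import structures.
From mathcomp Require Import all_boot all_order all_algebra.
From mathcomp Require Import all_classical all_reals all_analysis.
Set Implicit Arguments. Unset Strict Implicit. Unset Printing Implicit Defensive.
Import Order.TTheory GRing.Theory Num.Theory.
Import numFieldNormedType.Exports.
Local Open Scope classical_set_scope.
Local Open Scope ring_scope.

Section FuzzyDefs.
Variable R : realType.

Definition unit_iv (x : R) : Prop := 0 <= x <= 1.

(** t-norm on [0,1] (values outside [0,1] are irrelevant). *)
Definition is_tnorm (T : R -> R -> R) : Prop :=
  [/\ (forall x y, unit_iv x -> unit_iv y -> unit_iv (T x y)),
      (forall x y, unit_iv x -> unit_iv y -> T x y = T y x),
      (forall x y z, unit_iv x -> unit_iv y -> unit_iv z ->
          T x (T y z) = T (T x y) z),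
      (forall x x' y, unit_iv x -> unit_iv x' -> unit_iv y -> x <= x' ->
          T x y <= T x' y)
    & (forall x, unit_iv x -> T x 1 = x)].

(** left-continuity (in the first argument; by commutativity in both). *)
Definition left_continuous_tnorm (T : R -> R -> R) : Prop :=
  is_tnorm T /\
  forall x y, 0 < x <= 1 -> unit_iv y ->
    (fun z => T z y) @ x^'- --> T x y.

Definition resI (T : R -> R -> R) (x y : R) : R :=
  sup [set b : R | unit_iv b /\ T x b <= y].

Definition resN (T : R -> R -> R) (x : R) : R := resI T x 0.

Definition IMTL_triplet (T : R -> R -> R) : Prop :=
  left_continuous_tnorm T /\ forall x, unit_iv x -> resN T (resN T x) = x.

Variable U : finType.

Definition fuzzy_rel (Rt : U -> U -> R) : Prop := forall u v, unit_iv (Rt u v).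

Definition T_preorder (T : R -> R -> R) (Rt : U -> U -> R) : Prop :=
  [/\ fuzzy_rel Rt, (forall u, Rt u u = 1)
    & forall u v w, T (Rt u v) (Rt v w) <= Rt u w].

Definition fuzzy_set (A : U -> R) : Prop := forall u, unit_iv (A u).

Definition granule_plus (T : R -> R -> R) (Rt : U -> U -> R) (l : R) (u : U) : U -> R :=
  fun w => T (Rt w u) l.
Definition granule_minus (T : R -> R -> R) (Rt : U -> U -> R) (l : R) (v : U) : U -> R :=
  fun w => T (Rt v w) l.

(** R^-_{l2}(y) is adjacent to R^+_{l1}(x) *)
Definition adj_minus_to_plus (T : R -> R -> R) (Rt : U -> U -> R)
  (y : U) (l2 : R) (x : U) (l1 : R) : Prop :=
  l1 = resI T l2 (resN T (Rt y x)).

(** R^+_{l1}(x) is adjacent to R^-_{l2}(y) *)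
Definition adj_plus_to_minus (T : R -> R -> R) (Rt : U -> U -> R)
  (x : U) (l1 : R) (y : U) (l2 : R) : Prop :=
  l2 = resI T l1 (resN T (Rt y x)).

End FuzzyDefs.

(** loss function L : R x R -> R^+ of \/-type
    ("increasing"/"decreasing" read as strict) *)
Definition vee_loss (R : realType) (L : R -> R -> R) : Prop :=
  [/\ (forall x y, 0 <= L x y),
      (forall a, L a a = 0),
      (forall a x y, a < x -> x < y -> L x a < L y a /\ L a x < L a y)
    & (forall a x y, y < x -> x < a -> L x a < L y a /\ L a x < L a y)].

Definition feasible (R : realType) (U : finType) (T : R -> R -> R)
  (Rt : U -> U -> R) (B : U -> R) : Prop :=
  (forall u v, T (Rt u v) (B v) <= B u) /\ (forall u, 0 <= B u <= 1).

Definition optimal_solution (R : realType) (U : finType) (T : R -> R -> R)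
  (Rt : U -> U -> R) (A : U -> R) (L : R -> R -> R) (Ahat : U -> R) : Prop :=
  feasible T Rt Ahat /\
  forall B : U -> R, feasible T Rt B ->
    \sum_(u : U) L (A u) (Ahat u) <= \sum_(u : U) L (A u) (B u).

(* Main.v *)
Require Import Defs.
From HB Require Import structures.
From mathcomp Require Import all_boot all_order all_algebra.
From mathcomp Require Import all_classical all_reals all_analysis.
From mathcomp Require Import lra.
Import Order.TTheory GRing.Theory Num.Theory.
Import numFieldNormedType.Exports.
Local Open Scope classical_set_scope.
Local Open Scope ring_scope.
Set Implicit Arguments. Unset Strict Implicit.

Section Basic.
Variables (R : realType) (T : R -> R -> R).
Hypothesis HT : left_continuous_tnorm T.

Let Htn : is_tnorm T := HT.1.

Lemma Tiv x y : unit_iv x -> unit_iv y -> unit_iv (T x y).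
Proof. move: Htn; rewrite /is_tnorm => -[h _ _ _ _]; exact: h. Qed.
Lemma TC x y : unit_iv x -> unit_iv y -> T x y = T y x.
Proof. move: Htn; rewrite /is_tnorm => -[_ h _ _ _]; exact: h. Qed.
Lemma TA x y z : unit_iv x -> unit_iv y -> unit_iv z -> T x (T y z) = T (T x y) z.
Proof. move: Htn; rewrite /is_tnorm => -[_ _ h _ _]; exact: h. Qed.
Lemma Tmon1 x x' y : unit_iv x -> unit_iv x' -> unit_iv y -> x <= x' -> T x y <= T x' y.
Proof. move: Htn; rewrite /is_tnorm => -[_ _ _ h _]; exact: h. Qed.
Lemma T1 x : unit_iv x -> T x 1 = x.
Proof. move: Htn; rewrite /is_tnorm => -[_ _ _ _ h]; exact: h. Qed.

Lemma iv1 : unit_iv (1:R). Proof. by rewrite /unit_iv ler01 lexx. Qed.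
Lemma iv0 : unit_iv (0:R). Proof. by rewrite /unit_iv ler01 lexx. Qed.

Lemma T1l x : unit_iv x -> T 1 x = x.
Proof. by move=> hx; rewrite TC ?T1 //; exact: iv1. Qed.
Lemma Tmon2 x y y' : unit_iv x -> unit_iv y -> unit_iv y' -> y <= y' -> T x y <= T x y'.
Proof. by move=> hx hy hy' le; rewrite (TC hx hy) (TC hx hy'); apply: Tmon1. Qed.
Lemma Tler x y : unit_iv x -> unit_iv y -> T x y <= y.
Proof.
move=> hx hy; rewrite -{2}(T1l hy); apply: Tmon1 => //; first exact: iv1.
by case/andP: hx.
Qed.
Lemma Tlel x y : unit_iv x -> unit_iv y -> T x y <= x.
Proof. by move=> hx hy; rewrite TC //; apply: Tler. Qed.
Lemma Tge0 x y : unit_iv x -> unit_iv y -> 0 <= T x y.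
Proof. by move=> hx hy; case/andP: (Tiv hx hy). Qed.
Lemma T0 x : unit_iv x -> T x 0 = 0.
Proof. by move=> hx; apply/le_anti; rewrite Tler ?Tge0 //; exact: iv0. Qed.

Definition Sset a c := [set b : R | unit_iv b /\ T a b <= c].

Lemma Sset_sup a c : 0 <= c -> unit_iv a -> has_sup (Sset a c).
Proof.
move=> c0 ha; split; first by exists 0; split; [exact: iv0| rewrite T0].
by exists 1 => b [/andP[]].
Qed.

Lemma Iiv a c : 0 <= c -> unit_iv a -> unit_iv (resI T a c).
Proof.
move=> c0 ha; have hs := Sset_sup c0 ha.
apply/andP; split.
  by apply: (sup_upper_bound hs); split; [exact: iv0| rewrite T0].
by apply: ge_sup; [case: hs| move=> b [/andP[]]].
Qed.

Lemma I_ge a c b : 0 <= c -> unit_iv a -> unit_iv b -> T a b <= c -> b <= resI T a c.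
Proof. by move=> c0 ha hb hT; apply: (sup_upper_bound (Sset_sup c0 ha)). Qed.

Lemma I_T a c : 0 <= c -> unit_iv a -> T a (resI T a c) <= c.
Proof.
move=> c0 ha; have hs := Sset_sup c0 ha.
have hI := Iiv c0 ha; set s := resI T a c in hI *.
have [s0|s0] := eqVneq s 0; first by rewrite s0 T0.
have spos : 0 < s by rewrite lt0r s0; case/andP: hI.
rewrite leNgt; apply/negP => cT.
have s1 : 0 < s <= 1 by rewrite spos; case/andP: hI.
have lc := HT.2 s a s1 ha.
have F1 : \forall z \near s^'-, c < T z a.
  apply: (cvgr_gt _ lc); rewrite -(TC ha) //.
have F2 : \forall z \near s^'-, 0 < z := nbhs_left_gt spos.
have F3 : \forall z \near s^'-, z < s.
  by exists 1 => //=.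
have := @filter_ex _ _ (at_left_proper_filter s) _ (filterI (filterI F1 F2) F3).
case=> z [[Fz Fz0] Fzs].
have [b [hb Tb] zb] := sup_adherent (eps:=s - z) (ltac:(by rewrite subr_gt0)) hs.
rewrite opprB addrC subrK in zb; move: Tb.
apply/negP; rewrite -ltNge; apply: (lt_le_trans Fz).
have hz : unit_iv z by rewrite /unit_iv (ltW Fz0) /= (le_trans (ltW Fzs)) //; case/andP: s1.
rewrite (TC ha hb); apply: Tmon1 => //; exact: ltW.
Qed.

Lemma resid a c b : 0 <= c -> unit_iv a -> unit_iv b ->
  (b <= resI T a c) <-> (T a b <= c).
Proof.
move=> c0 ha hb; split; last exact: I_ge.
move=> le; apply: le_trans (I_T c0 ha); apply: Tmon2 => //; exact: Iiv.
Qed.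

Lemma I1 c : unit_iv c -> resI T 1 c = c.
Proof.
move=> hc; have c0 : 0 <= c by case/andP: hc.
apply/le_anti/andP; split.
  by rewrite -{1}(T1l (Iiv c0 iv1)); apply: I_T => //; exact: iv1.
by apply: I_ge => //; [exact: iv1| rewrite T1l].
Qed.

Lemma Imono a c c' : 0 <= c -> c <= c' -> unit_iv a -> resI T a c <= resI T a c'.
Proof.
move=> c0 cc ha; apply: I_ge => //; first exact: le_trans cc.
  exact: Iiv.
exact: le_trans (I_T c0 ha) cc.
Qed.

Lemma I_ge_c a c : unit_iv a -> unit_iv c -> c <= resI T a c.
Proof.
move=> ha hc; have c0 : 0 <= c by case/andP: hc.
by apply: I_ge => //; apply: Tler.
Qed.

Lemma Niv b : unit_iv b -> unit_iv (resN T b).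
Proof. by move=> hb; apply: Iiv. Qed.

Lemma IN a b : unit_iv a -> unit_iv b -> resI T a (resN T b) = resN T (T a b).
Proof.
move=> ha hb; rewrite /resN.
have hN := Niv hb; rewrite /resN in hN.
have hab := Tiv ha hb.
have N0 : 0 <= resI T b 0 by case/andP: hN.
apply/le_anti/andP; split.
  apply: I_ge => //; first exact: Iiv.
  have hz := Iiv N0 ha.
  rewrite (TC ha hb) -TA //; apply: le_trans (I_T (lexx 0) hb).
  apply: Tmon2 => //; [exact: Tiv| exact: I_T].
have hw := Iiv (lexx 0) hab.
apply: I_ge => //; apply: I_ge => //; first exact: Tiv.
by rewrite TA // -(TC ha hb); apply: I_T.
Qed.

End Basic.

Section Loss.
Variables (R : realType) (L : R -> R -> R).
Hypothesis HL : vee_loss L.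

Lemma loss_up_strict a b c : a <= b -> b < c -> L a b < L a c.
Proof.
case: HL => L0 Laa Lup _ ab bc.
have [<-|ab'] := eqVneq a b.
  rewrite Laa; have ac : a < (a + c) / 2 by lra.
  have cc : (a + c) / 2 < c by lra.
  exact: le_lt_trans (L0 a _) (Lup a _ _ ac cc).2.
have ab2 : a < b by rewrite lt_neqAle ab' ab.
exact: (Lup a b c ab2 bc).2.
Qed.

Lemma loss_up a b c : a <= b -> b <= c -> L a b <= L a c.
Proof.
move=> ab; rewrite le_eqVlt => /orP[/eqP->//|bc].
exact/ltW/loss_up_strict.
Qed.

Lemma loss_down_strict a b c : c < b -> b <= a -> L a b < L a c.
Proof.
case: HL => L0 Laa _ Ldn cb ba.
have [->|ab'] := eqVneq b a.
  rewrite Laa; have ac : (a + c) / 2 < a by lra.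
  have cc : c < (a + c) / 2 by lra.
  exact: le_lt_trans (L0 a _) (Ldn a _ _ cc ac).2.
have ab2 : b < a by rewrite lt_neqAle ab' ba.
exact: (Ldn a b c cb ab2).2.
Qed.

Lemma loss_down a b c : c <= b -> b <= a -> L a b <= L a c.
Proof.
rewrite le_eqVlt => /orP[/eqP->//|cb] ba.
exact/ltW/loss_down_strict.
Qed.
End Loss.

Lemma sum_strict (R : realType) (U : finType) (f g : U -> R) u :
  (forall z, f z <= g z) -> f u < g u -> \sum_z f z < \sum_z g z.
Proof.
move=> fg fu; rewrite (bigD1 u) //= [X in _ < X](bigD1 u) //=.
by apply: ltr_leD => //; apply: ler_sum.
Qed.

Lemma argmax_spec (R : realType) (I : finType) (i0 : I) (P : pred I) (F : I -> R) :
  P i0 -> exists i, P i /\ forall j, P j -> F j <= F i.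
Proof.
move=> Pi0; case: (arg_maxP F Pi0) => i Pi H; exists i; split => // j /H.
Qed.

Lemma argmin_spec (R : realType) (I : finType) (i0 : I) (P : pred I) (F : I -> R) :
  P i0 -> exists i, P i /\ forall j, P j -> F i <= F j.
Proof.
move=> Pi0; case: (arg_minP F Pi0) => i Pi H; exists i; split => // j /H.
Qed.

Section Main.
Variables (R : realType) (U : finType) (T : R -> R -> R) (Rt : U -> U -> R)
  (A : U -> R) (L : R -> R -> R) (Ahat : U -> R).
Hypotheses (HT : left_continuous_tnorm T) (HR : T_preorder T Rt)
  (HA : fuzzy_set A) (HL : vee_loss L) (Hopt : optimal_solution T Rt A L Ahat).

Let Rtiv u v : unit_iv (Rt u v). Proof. by case: HR => h _ _; apply: h. Qed.
Let Rrefl u : Rt u u = 1. Proof. by case: HR. Qed.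
Let Rtr u v w : T (Rt u v) (Rt v w) <= Rt u w. Proof. by case: HR => _ _; apply. Qed.
Let Ahiv u : unit_iv (Ahat u). Proof. by case: Hopt => -[_ h] _; apply: h. Qed.
Let Afeas u v : T (Rt u v) (Ahat v) <= Ahat u. Proof. by case: Hopt => -[h _] _; apply: h. Qed.
Let Aopt B : feasible T Rt B -> \sum_u L (A u) (Ahat u) <= \sum_u L (A u) (B u).
Proof. by case: Hopt => _; apply. Qed.

Let m y := Num.min (A y) (Ahat y).
Let M y := Num.max (A y) (Ahat y).
Let miv y : unit_iv (m y). Proof. by rewrite /m; case: leP => _; [apply: HA| apply: Ahiv]. Qed.
Let Miv y : unit_iv (M y). Proof. by rewrite /M; case: leP => _; [apply: Ahiv| apply: HA]. Qed.
Let M0 y : 0 <= M y. Proof. by case/andP: (Miv y). Qed.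

Let Tchain u w y b : unit_iv b -> T (Rt u w) (T (Rt w y) b) <= T (Rt u y) b.
Proof.
move=> hb; rewrite (TA HT) //; apply: (Tmon1 HT) => //; first exact: Tiv.
Qed.

Lemma key1 x : A x < Ahat x -> exists y, Ahat x <= T (Rt x y) (m y).
Proof.
move=> Ax; case: (pselect (exists y, Ahat x <= T (Rt x y) (m y))) => // H.
have H' : forall y, T (Rt x y) (m y) < Ahat x.
  by move=> y; rewrite ltNge; apply/negP => h; apply: H; exists y.
have ym z : {y | forall y', T (Rt z y') (m y') <= T (Rt z y) (m y)}.
  apply: cid; have [y [_ Hy]] := argmax_spec (fun y => T (Rt z y) (m y)) (isT : predT z).
  by exists y => y'; apply: Hy.
pose B z := T (Rt z (sval (ym z))) (m (sval (ym z))).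
have Bge z y : T (Rt z y) (m y) <= B z by rewrite /B; case: (ym z).
have Biv z : unit_iv (B z) by apply: Tiv.
have Bfeas : feasible T Rt B.
  split => [z w|z]; last exact: Biv z.
  rewrite {1}/B; apply: le_trans (Tchain _ _ _ _) (Bge _ _); exact: miv.
have Ble z : B z <= Ahat z.
  rewrite /B; set y := sval _; apply: le_trans (Afeas z y).
  apply: (Tmon2 HT) => //; by rewrite /m ge_min lexx orbT.
have mB z : m z <= B z by have := Bge z z; rewrite Rrefl (T1l HT).
exfalso; move: (Aopt Bfeas); apply/negP; rewrite -ltNge.
apply: (sum_strict (u := x)).
  move=> z; case: (leP (A z) (Ahat z)) => hz.
    by apply: (loss_up HL) (Ble z); move: (mB z); rewrite /m min_l.
  have -> : B z = Ahat z.
    by apply/le_anti; rewrite Ble /=; move: (mB z); rewrite /m min_r // ltW.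
  done.
apply: (loss_up_strict HL); last by apply: H'.
by move: (mB x); rewrite /m min_l // ltW.
Qed.

Lemma chain1 u : A u < Ahat u ->
  exists v, (Ahat v < A v \/ Ahat v = A v) /\ Ahat u = T (Rt u v) (Ahat v).
Proof.
move=> Au.
pose P := fun y => Ahat u <= T (Rt u y) (Ahat y).
have Pu : P u by rewrite /P Rrefl (T1l HT).
have [w [Pw Hw]] := argmax_spec A Pu.
case: (leP (Ahat w) (A w)) => hw.
  exists w; split; first by move: hw; rewrite le_eqVlt => /orP[/eqP->|->]; [right|left].
  by apply/le_anti/andP; split; [exact: Pw| exact: Afeas].
have [y Hy] := key1 hw.
have Py : P y.
  apply: le_trans Pw _; apply: le_trans (Tchain _ _ _ _) => //.
  apply: (Tmon2 HT) => //; first exact: Tiv.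
  apply: le_trans Hy _; apply: (Tmon2 HT) => //; by rewrite /m ge_min lexx orbT.
exfalso; move: (Hw y Py); apply/negP; rewrite -ltNge.
apply: lt_le_trans hw _; apply: le_trans Hy _; apply: le_trans (Tler HT _ _) _ => //.
by rewrite /m ge_min lexx.
Qed.

Lemma key2 x : Ahat x < A x -> exists y, resI T (Rt y x) (M y) <= Ahat x.
Proof.
move=> Ax; case: (pselect (exists y, resI T (Rt y x) (M y) <= Ahat x)) => // H.
have H' : forall y, Ahat x < resI T (Rt y x) (M y).
  by move=> y; rewrite ltNge; apply/negP => h; apply: H; exists y.
have yn z : {y | forall y', resI T (Rt y z) (M y) <= resI T (Rt y' z) (M y')}.
  apply: cid; have [y [_ Hy]] := argmin_spec (fun y => resI T (Rt y z) (M y)) (isT : predT z).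
  by exists y => y'; apply: Hy.
pose B z := resI T (Rt (sval (yn z)) z) (M (sval (yn z))).
have Ble z y : B z <= resI T (Rt y z) (M y) by rewrite /B; case: (yn z).
have Biv z : unit_iv (B z) by apply: Iiv.
have Bfeas : feasible T Rt B.
  split => [z w|z]; last exact: Biv z.
  rewrite {2}/B; set y := sval _.
  apply: I_ge => //; first exact: Tiv.
  apply: le_trans (Tchain _ _ _ _) _ => //.
  apply: le_trans (I_T HT (M0 y) (Rtiv y w)).
  apply: (Tmon2 HT) => //; exact: Iiv.
have Bge z : Ahat z <= B z.
  rewrite /B; set y := sval _; apply: I_ge => //.
  by apply: le_trans (Afeas y z) _; rewrite /M le_max lexx orbT.
have BM z : B z <= M z by have := Ble z z; rewrite Rrefl (I1 HT).
exfalso; move: (Aopt Bfeas); apply/negP; rewrite -ltNge.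
apply: (sum_strict (u := x)).
  move=> z; case: (leP (A z) (Ahat z)) => hz.
    have -> : B z = Ahat z.
      by apply/le_anti; rewrite Bge andbT; move: (BM z); rewrite /M max_r.
    done.
  by apply: (loss_down HL) (Bge z) _; move: (BM z); rewrite /M max_l // ltW.
apply: (loss_down_strict HL); first by apply: H'.
by move: (BM x); rewrite /M max_l // ltW.
Qed.

Lemma chain2 u : Ahat u < A u ->
  exists v, (A v < Ahat v \/ Ahat v = A v) /\ Ahat u = resI T (Rt v u) (Ahat v).
Proof.
move=> Au.
pose P := fun y => resI T (Rt y u) (Ahat y) <= Ahat u.
have Pu : P u by rewrite /P Rrefl (I1 HT).
have [w [Pw Hw]] := argmin_spec A Pu.
have Ah0 y : 0 <= Ahat y by case/andP: (Ahiv y).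
case: (leP (A w) (Ahat w)) => hw.
  exists w; split; first by move: hw; rewrite le_eqVlt => /orP[/eqP->|->]; [right|left].
  apply/le_anti/andP; split; last exact: Pw.
  apply: I_ge => //; exact: Afeas.
have [y Hy] := key2 hw.
have Py : P y.
  apply: le_trans Pw; apply: I_ge => //; first exact: Iiv.
  apply: le_trans Hy; apply: le_trans (Imono HT (Ah0 y) _ (Rtiv y w)); last first.
    by rewrite /M le_max lexx orbT.
  apply: I_ge => //; first by apply: Tiv => //; exact: Iiv.
  apply: le_trans (Tchain _ _ _ _) _; first exact: Iiv.
  exact: I_T.
exfalso; move: (Hw y Py); apply/negP; rewrite -ltNge.
apply: le_lt_trans hw; apply: le_trans Hy; apply: le_trans (I_ge_c HT _ _) => //.
by rewrite /M le_max lexx.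
Qed.

End Main.

Local Close Scope classical_set_scope.
Unset Implicit Arguments.

Theorem corollary2 (R : realType) (U : finType) (HU : (0 < #|U|)%N)
  (T : R -> R -> R) (HT : IMTL_triplet T)
  (Rt : U -> U -> R) (HR : T_preorder T Rt)
  (A : U -> R) (HA : fuzzy_set A)
  (L : R -> R -> R) (HL : vee_loss L)
  (Ahat : U -> R) (Hopt : optimal_solution T Rt A L Ahat) :
  (forall u, A u < Ahat u ->
     exists v, (Ahat v < A v \/ Ahat v = A v) /\
       adj_plus_to_minus T Rt v (Ahat v) u (resN T (Ahat u))) /\
  (forall u, Ahat u < A u ->
     exists v, (A v < Ahat v \/ Ahat v = A v) /\
       adj_minus_to_plus T Rt v (resN T (Ahat v)) u (Ahat u)).
Proof.
case: HT => HTl Ninv.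
have Rtiv u v : unit_iv (Rt u v) by case: HR => h _ _; apply: h.
have Ahiv u : unit_iv (Ahat u) by case: Hopt => -[_ h] _; apply: h.
split.
  move=> u Au; have [v [hv e]] := chain1 HTl HR HA HL Hopt Au.
  exists v; split => //; rewrite /adj_plus_to_minus (IN HTl (Ahiv v) (Rtiv u v)).
  by rewrite -(TC HTl (Rtiv u v) (Ahiv v)) -e.
move=> u Au; have [v [hv e]] := chain2 HTl HR HA HL Hopt Au.
exists v; split => //; rewrite /adj_minus_to_plus (IN HTl (Niv HTl (Ahiv v)) (Rtiv v u)) e.
have -> : resI T (Rt v u) (Ahat v) = resI T (Rt v u) (resN T (resN T (Ahat v))) by rewrite Ninv.
by rewrite (IN HTl (Rtiv v u) (Niv HTl (Ahiv v))) (TC HTl (Rtiv v u) (Niv HTl (Ahiv v))).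
Qed.
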